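(* Let $\{x_k\}$ be generated by the Subgradient-InexP method with the exogenous stepsize rule, under the standing assumptions, and assume $\{x_k\}$ converges to a point $x_*\in\Omega^*$. Then there is $c>0$ with $\|s_k\|\le c$ for all $k$, and with $\Gamma:=\max\{1,c\}$ and $\rho:=\nu+2\mu$, $\nu=\frac{1+2\bar\gamma}{1-2\bar\lambda}$, for every $N\in\mathbb{N}$, $$\min\{f(x_k)-f^*:\ k=0,1,\dots,N\}\le \Gamma\,\frac{\|x_0-x_*\|^2+\rho\sum_{k=0}^N\alpha_k^2}{2\sum_{k=0}^N\alpha_k}.$$
   Context: Problem: minimize a convex $f:\mathbb{R}^n\to\mathbb{R}$ over a nonempty closed convex $C\subset\mathbb{R}^n$; $f^*:=\inf_{x\in C}f(x)$, $\Omega^*$ the set of minimizers. For $\epsilon\ge0$, $\partial_\epsilon f(x):=\{s: f(y)\ge f(x)+\langle s,y-x\rangle-\epsilon\ \forall y\}$. Relative error tolerance function: any $\varphi_{\gamma,\theta,\lambda}:(\mathbb{R}^n)^3\to[0,\infty)$ with $\varphi_{\gamma,\theta,\lambda}(u,v,w)\le\gamma\|v-u\|^2+\theta\|w-v\|^2+\lambda\|w-u\|^2$; for $u\in C$, $\mathcal{P}_C(\varphi_{\gamma,\theta,\lambda},u,v):=\{w\in C:\langle v-w,z-w\rangle\le\varphi_{\gamma,\theta,\lambda}(u,v,w)\ \forall z\in C\}$. Subgradient-InexP method: $x_0\in C$; at iteration $k$, if $0\in\partial f(x_k)$ stop; otherwise choose nonzero $s_k\in\partial_{\epsilon_k}f(x_k)$,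 stepsize $t_k>0$, and $x_{k+1}\in\mathcal{P}_C(\varphi_{\gamma_k,\theta_k,\lambda_k},x_k,x_k-t_ks_k)$. Standing assumptions: $\gamma_k\in[0,\bar\gamma)$, $\theta_k\in[0,\bar\theta)$, $\lambda_k\in[0,\bar\lambda)$ with $\bar\gamma\ge0$, $\bar\theta,\bar\lambda\in[0,1/2)$; the sequence is infinite. Exogenous stepsize rule: $\mu\ge0$; $\{\alpha_k\}$, $\{\epsilon_k\}$ nonnegative, $\{\epsilon_k\}$ nonincreasing, $\sum_k\alpha_k=+\infty$, $\sum_k\alpha_k^2<+\infty$, $\epsilon_k\le\mu\alpha_k$; $t_k:=\alpha_k/\eta_k$, $\eta_k:=\max\{1,\|s_k\|\}$. *)

(* Defs.v *)
From HB Require Import structures.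
From mathcomp Require Import all_boot all_order all_algebra.
From mathcomp Require Import all_classical all_reals all_analysis.
Set Implicit Arguments. Unset Strict Implicit. Unset Printing Implicit Defensive.
Import Order.TTheory GRing.Theory Num.Theory.
Import numFieldNormedType.Exports.
Local Open Scope classical_set_scope.
Local Open Scope ring_scope.

Section Defs.
Variables (R : realType) (n : nat).
Notation V := 'rV[R]_n.

Definition dotp (u v : V) : R := \sum_(i < n) u 0 i * v 0 i.
Definition enorm (u : V) : R := Num.sqrt (dotp u u).

Definition convex_fun (f : V -> R) : Prop :=
  forall x y (l : R), 0 <= l <= 1 ->
    f (l *: x + (1 - l) *: y) <= l * f x + (1 - l) * f y.

Definition eps_subdiff (f : V -> R) (eps : R) (x : V) : set V :=
  [set s | forall y, f y >= f x + dotp s (y - x) - eps].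

Definition subdiff (f : V -> R) (x : V) : set V := eps_subdiff f 0 x.

Definition fstar (f : V -> R) (C : set V) : R := inf [set f x | x in C].
Definition Omega_star (f : V -> R) (C : set V) : set V :=
  [set x | C x /\ f x = fstar f C].

Definition rel_err_tol (g th la : R) (phi : V -> V -> V -> R) : Prop :=
  forall u v w, 0 <= phi u v w /\
    phi u v w <= g * enorm (v - u) ^+ 2 + th * enorm (w - v) ^+ 2
                 + la * enorm (w - u) ^+ 2.

Definition inexP (C : set V) (phi : V -> V -> V -> R) (u v : V) : set V :=
  [set w | C w /\ forall z, C z -> dotp (v - w) (z - w) <= phi u v w].

End Defs.

(* Main.v *)
Require Import Defs.
From HB Require Import structures.
From mathcomp Require Import all_boot all_order all_algebra.
From mathcomp Require Import all_classical all_reals all_analysis.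
From mathcomp Require Import ring lra.
Import Order.TTheory GRing.Theory Num.Theory.
Import numFieldNormedType.Exports.
Local Open Scope classical_set_scope.
Local Open Scope ring_scope.




Section Aux.
Variables (R : realType) (n : nat).
Notation V := 'rV[R]_n.
Implicit Types (u v w z : V).

Lemma dotpC u v : dotp u v = dotp v u.
Proof. by apply: eq_bigr => i _; rewrite mulrC. Qed.

Lemma dotpDl u v w : dotp (u + v) w = dotp u w + dotp v w.
Proof. by rewrite /dotp -big_split; apply: eq_bigr => i _; rewrite !mxE mulrDl. Qed.

Lemma dotpNl u w : dotp (- u) w = - dotp u w.
Proof. by rewrite /dotp -sumrN; apply: eq_bigr => i _; rewrite !mxE mulNr. Qed.

Lemma dotpZl (a : R) u w : dotp (a *: u) w = a * dotp u w.
Proof. by rewrite /dotp mulr_sumr; apply: eq_bigr => i _; rewrite !mxE mulrA. Qed.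

Lemma dotpBl u v w : dotp (u - v) w = dotp u w - dotp v w.
Proof. by rewrite dotpDl dotpNl. Qed.

Lemma dotpBr u v w : dotp w (u - v) = dotp w u - dotp w v.
Proof. by rewrite dotpC dotpBl (dotpC u) (dotpC v). Qed.

Lemma dotpZr (a : R) u w : dotp w (a *: u) = a * dotp w u.
Proof. by rewrite dotpC dotpZl dotpC. Qed.

Lemma dotp_ge0 u : 0 <= dotp u u.
Proof. by apply: sumr_ge0 => i _; rewrite -expr2 sqr_ge0. Qed.

Lemma enorm_sq u : enorm u ^+ 2 = dotp u u.
Proof. by rewrite /enorm sqr_sqrtr // dotp_ge0. Qed.

Lemma enorm_ge0 u : 0 <= enorm u.
Proof. exact: sqrtr_ge0. Qed.

Lemma coord_le u i : `|u 0 i| <= enorm u.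
Proof.
rewrite -sqrtr_sqr /enorm ler_sqrt ?dotp_ge0 //.
rewrite /dotp (bigD1 i) //= -expr2 lerDl.
by apply: sumr_ge0 => j _; rewrite -expr2 sqr_ge0.
Qed.

Lemma three_pt u v w : dotp (v - w) (v - w) =
  dotp (u - w) (u - w) - dotp (u - v) (u - v) + 2 * dotp (u - v) (w - v).
Proof.
rewrite !dotpBl !dotpBr.
have := dotpC u v; have := dotpC u w; have := dotpC v w. lra.
Qed.

Lemma entry_norm (x : V) i : `|x 0 i| <= `|x|.
Proof.
have -> : `|x| = mx_norm x by [].
rewrite mx_normrE. exact: (le_trans _ (le_bigmax _ _ (0, i))).
Qed.

End Aux.
Arguments dotpC {R n}. Arguments dotpDl {R n}. Arguments dotpNl {R n}.
Arguments dotpZl {R n}. Arguments dotpBl {R n}. Arguments dotpBr {R n}.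
Arguments dotpZr {R n}. Arguments dotp_ge0 {R n}. Arguments enorm_sq {R n}.
Arguments enorm_ge0 {R n}. Arguments coord_le {R n}. Arguments three_pt {R n}.
Arguments entry_norm {R n}.



Lemma box_bound (R : realType) (n : nat) (f : 'rV[R]_n -> R) : convex_fun f ->
  forall m (M : R), 0 < M -> exists B, forall y : 'rV[R]_n,
   (forall i : 'I_n, (m <= i)%N -> y 0 i = 0) ->
   (forall i, `|y 0 i| <= M) -> f y <= B.
Proof.
move=> cf; elim=> [|m IH] M M0.
  exists (f 0) => y hy _.
  have -> : y = 0 by apply/rowP => i; rewrite mxE; exact: hy.
  by [].
case: (ltnP m n) => hmn; last first.
  have [B HB] := IH M M0; exists B => y hy hM; apply: HB => // i hi.
  by move: (leq_trans hmn hi); rewrite leqNgt ltn_ord.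
have M20 : 0 < 2 * M by rewrite mulr_gt0.
have [B1 HB1] := IH (2 * M) M20.
pose e : 'rV[R]_n := \row_i (if (i : nat) == m then 1 else 0).
pose B2 := Num.max (f ((2 * M) *: e)) (f ((- (2 * M)) *: e)).
have H1 : forall t, `|t| <= 2 * M -> f (t *: e) <= B2.
  move=> t ht; have /andP[ta tb] : - (2*M) <= t <= 2*M by rewrite -ler_norml.
  pose l := (t + 2 * M) / (4 * M).
  have l01 : 0 <= l <= 1.
    apply/andP; split; rewrite /l.
      by apply: divr_ge0; lra.
    by rewrite ler_pdivrMr; lra.
  have -> : t *: e = l *: ((2 * M) *: e) + (1 - l) *: ((- (2 * M)) *: e).
    rewrite !scalerA -scalerDl; congr (_ *: _); rewrite /l; field; lra.
  apply: le_trans (cf _ _ _ l01) _.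
  have ha : f ((2 * M) *: e) <= B2 by rewrite le_max lexx.
  have hb : f ((- (2 * M)) *: e) <= B2 by rewrite le_max lexx orbT.
  case/andP: l01 => l0 l1.
  have := ler_wpM2l l0 ha.
  have : 0 <= 1 - l by lra.
  move=> h1l; have := ler_wpM2l h1l hb.
  lra.
exists ((B1 + B2) / 2) => y hy hM.
pose im : 'I_n := Ordinal hmn.
pose t := y 0 im.
pose y' : 'rV[R]_n := \row_i (if (i : nat) == m then 0 else y 0 i).
have -> : y = (1/2) *: (2 *: y') + (1 - 1/2) *: (2 *: (t *: e)).
  apply/rowP => i; rewrite !mxE; case: eqP => him.
    have -> : i = im by apply: val_inj.
    rewrite /t mulr0 mulr1.
    have hh : forall a1 : R, a1 = 1/2*0 + (1-1/2)*(2*a1) by move=> a1; field.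
    exact: hh.
  have hh : forall a1 b1 : R, a1 = 1/2*(2*a1) + (1-1/2)*(2*(b1*0)) by move=> a1 b1; field.
  exact: hh.
have h12 : 0 <= (1/2 : R) <= 1 by apply/andP; split; lra.
apply: le_trans (cf (2 *: y') (2 *: (t *: e)) _ h12) _.
have h1 : f (2 *: y') <= B1.
  apply: HB1 => i; rewrite !mxE.
    case: eqP => him; first by rewrite mulr0.
    move=> hi; rewrite hy ?mulr0 //.
    by rewrite ltn_neqAle hi andbT; apply/eqP => E; apply: him; rewrite E.
  case: eqP => him; first by rewrite mulr0 normr0; lra.
  rewrite normrM ger0_norm //; have := hM i; lra.
have h2 : f (2 *: (t *: e)) <= B2.
  rewrite scalerA; apply: H1; rewrite normrM ger0_norm //; have := hM im; rewrite -/t; lra.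
lra.
Qed.



Lemma step (R : realType) (n : nat) (u v w z s : 'rV[R]_n)
  (t g th la gb lb P fu fz eps al mu : R) :
  v = u - t *: s ->
  dotp (v - w) (z - w) <= P -> dotp (v - w) (u - w) <= P ->
  P <= g * enorm (v - u) ^+ 2 + th * enorm (w - v) ^+ 2 + la * enorm (w - u) ^+ 2 ->
  0 <= g <= gb -> 0 <= th <= 1/2 -> 0 <= la <= lb -> lb < 1/2 ->
  fz >= fu + dotp s (z - u) - eps ->
  0 <= t -> t * enorm s <= al -> t <= al -> 0 <= eps <= mu * al -> 0 <= al -> 0 <= mu ->
  2 * t * (fu - fz) <= dotp (u - z) (u - z) - dotp (w - z) (w - z)
     + ((1 + 2 * gb) / (1 - 2 * lb) + 2 * mu) * al ^+ 2.
Proof.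
move=> hv h1 h2 h3 /andP[g0 ggb] /andP[th0 th1] /andP[la0 llb] lb2 hsub t0 tal1 tal ep al0 mu0.
case/andP: ep => ep0 epmu.
rewrite !enorm_sq in h3.
set A := dotp (w - u) (w - u).
set D := dotp (v - w) (v - w).
set S := dotp s s.
have A0 : 0 <= A by apply: dotp_ge0.
have D0 : 0 <= D by apply: dotp_ge0.
have E1 := three_pt v w z.
have E2 : A = dotp (v - u) (v - u) - D + 2 * dotp (v - w) (u - w).
  exact: three_pt v w u.
have E3 : dotp (w - v) (w - v) = D.
  by rewrite /D !dotpBl !dotpBr (dotpC v w); lra.
have E4 : dotp (v - z) (v - z) = dotp (u - z) (u - z) - 2 * t * dotp s (u - z) + t ^+ 2 * S.
  have -> : v - z = (u - z) - t *: s by rewrite hv; rewrite addrAC.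
  rewrite !dotpBl !dotpBr !dotpZl !dotpZr /S (dotpC u s) (dotpC z s).
  move: (dotp u u) (dotp u z) (dotp z u) (dotp z z) (dotp s u) (dotp s z) (dotp s s) => a1 a2 a3 a4 a5 a6 a7.
  clear; ring.
have E5 : dotp (v - u) (v - u) = t ^+ 2 * S.
  have -> : v - u = (- t) *: s by rewrite hv scaleNr addrAC subrr add0r.
  by rewrite dotpZl dotpZr mulrA mulrNN -expr2.
have E6 : dotp s (z - u) = - dotp s (u - z).
  by rewrite !dotpBr; lra.
clear hv.
set Nu := (1 + 2 * gb) / (1 - 2 * lb).
have hN : Nu * (1 - 2 * lb) = 1 + 2 * gb by rewrite /Nu; field; lra.
have N0 : 0 <= Nu by rewrite /Nu divr_ge0 //; lra.
rewrite E3 E5 in h3. rewrite E5 in E2.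
have S0 : 0 <= S by apply: dotp_ge0.
have q2 : t ^+ 2 * S <= al ^+ 2.
  have -> : t ^+ 2 * S = (t * enorm s) ^+ 2 by rewrite exprMn enorm_sq.
  rewrite ler_sqr ?nnegrE //; exact: mulr_ge0 (enorm_ge0 _).
set B := t ^+ 2 * S in h3 E2 E4 q2 *.
have B0 : 0 <= B by rewrite /B mulr_ge0 // exprn_ge0.
have h3' : P <= g * B + th * D + la * A by exact: h3.
clear h3.
(* (1-2la) A <= (1+2g) B - (1-2th) D *)
have hA : A * (1 - 2 * lb) <= (Nu * B) * (1 - 2 * lb).
  have : la * A <= lb * A by apply: ler_wpM2r.
  have : g * B <= gb * B by apply: ler_wpM2r.
  have : th * D <= 1/2 * D by apply: ler_wpM2r.
  have := congr1 (fun r => r * B) hN; rewrite /=. lra.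
rewrite ler_pM2r in hA; last by lra.
rewrite E1 E4 -/D. rewrite E6 in hsub.
have h1' : dotp (v - w) (z - w) <= P by exact: h1.
have : la * A <= lb * A by apply: ler_wpM2r.
have : g * B <= gb * B by apply: ler_wpM2r.
have : th * D <= 1/2 * D by apply: ler_wpM2r.
have : lb * A <= lb * (Nu * B) by apply: ler_wpM2l => //; lra.
have : (Nu * (1 - 2 * lb)) * B = (1 + 2 * gb) * B by rewrite hN.
have : t * dotp s (u - z) >= t * (fu - fz - eps) by apply: ler_wpM2l => //; lra.
have : t * eps <= al * (mu * al) by apply: ler_pM.
have : Nu * B <= Nu * al ^+ 2 by apply: ler_wpM2l.
lra.
Qed.



Lemma seq_coord_bounded (R : realType) n (x : nat -> 'rV[R]_n) (xs : 'rV[R]_n) :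
  x @ \oo --> xs -> exists M, forall k i, `|x k 0 i| <= M.
Proof.
move=> h. have := cvg_seq_bounded (cvgP _ h).
move=> /ex_bound [|M /= HM]. exact: (@globally_properfilter _ _ 0%N).
exists M => k i. exact: le_trans (entry_norm (x k) i) (HM k I).
Qed.

Lemma sub_bound (R : realType) (n : nat) (f : 'rV[R]_n -> R) (B e K : R) (x s : 'rV[R]_n) :
  convex_fun f -> s != 0 ->
  (forall y : 'rV[R]_n, (forall i, `|y 0 i| <= `|K| + 1) -> f y <= B) ->
  (forall i, `|x 0 i| <= K) ->
  eps_subdiff f e x s ->
  enorm s <= B - 2 * f 0 + B + e.
Proof.
move=> cf sk0 HB hx hsub.
have en0 : 0 < enorm s.
  rewrite lt_neqAle enorm_ge0 andbT; apply/eqP => E; move/eqP: sk0; apply.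
  apply/rowP => i; have := coord_le s i; rewrite -E mxE normr_le0 => /eqP //.
set u := (enorm s)^-1 *: s.
have hu : forall i, `|u 0 i| <= 1.
  move=> i; rewrite mxE normrM ger0_norm ?invr_ge0 ?enorm_ge0 //.
  by rewrite mulrC ler_pdivrMr // mul1r coord_le.
have hs := hsub (x + u).
rewrite (addrC x u) addrK in hs.
have hdu : dotp s u = enorm s.
  by rewrite dotpZr -enorm_sq expr2 mulKf // lt0r_neq0.
rewrite hdu in hs.
have hKK : K <= `|K| + 1 by have := ler_norm K; lra.
have h1 : f (u + x) <= B.
  apply: HB => i; rewrite mxE; apply: le_trans (ler_normD _ _) _.
  by apply: le_trans (lerD (hu i) (le_trans (hx i) (ler_norm K))) _; rewrite addrC.
have h2 : f (- x) <= B.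
  by apply: HB => i; rewrite mxE normrN; apply: le_trans (hx i) hKK.
have h12 : 0 <= (1/2 : R) <= 1 by apply/andP; split; lra.
have := cf x (- x) _ h12.
have -> : (1/2 : R) *: x + (1 - 1/2) *: - x = 0.
  have -> : (1 - 1/2 : R) = 1/2 by field.
  by rewrite scalerN addrN.
lra.
Qed.



Theorem mainTheorem6 (R : realType) (n : nat)
  (f : 'rV[R]_n -> R) (C : set 'rV[R]_n)
  (gbar thbar lbar mu : R)
  (gam th lam alpha eps t : nat -> R)
  (phi : nat -> 'rV[R]_n -> 'rV[R]_n -> 'rV[R]_n -> R)
  (x s : nat -> 'rV[R]_n) (xstar : 'rV[R]_n) :
  (* problem data *)
  convex_fun f -> C !=set0 -> closed C -> convex_set C ->
  (* standing assumptions on the tolerance parameters *)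
  0 <= gbar -> 0 <= thbar < 1/2 -> 0 <= lbar < 1/2 ->
  (forall k, 0 <= gam k < gbar) -> (forall k, 0 <= th k < thbar) ->
  (forall k, 0 <= lam k < lbar) ->
  (* exogenous stepsize rule *)
  0 <= mu ->
  (forall k, 0 <= alpha k) -> (forall k, 0 <= eps k) ->
  {homo eps : i j / (i <= j)%N >-> j <= i} ->
  series alpha @ \oo --> +oo ->
  cvgn (series (fun k => alpha k ^+ 2)) ->
  (forall k, eps k <= mu * alpha k) ->
  (* Subgradient-InexP iterates (infinite sequence) *)
  C (x 0%N) ->
  (forall k, ~ subdiff f (x k) 0) ->
  (forall k, s k != 0 /\ eps_subdiff f (eps k) (x k) (s k)) ->
  (forall k, t k = alpha k / Num.max 1 (enorm (s k)) /\ 0 < t k) ->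
  (forall k, rel_err_tol (gam k) (th k) (lam k) (phi k)) ->
  (forall k, inexP C (phi k) (x k) (x k - t k *: s k) (x k.+1)) ->
  (* convergence to a solution *)
  Omega_star f C xstar ->
  x @ \oo --> xstar ->
  exists c : R, 0 < c /\ (forall k, enorm (s k) <= c) /\
    let Gamma := Num.max 1 c in
    let nu := (1 + 2 * gbar) / (1 - 2 * lbar) in
    let rho := nu + 2 * mu in
    forall N : nat,
      \big[Num.min/(f (x 0%N) - fstar f C)]_(k < N.+1) (f (x k) - fstar f C)
      <= Gamma * (enorm (x 0%N - xstar) ^+ 2
                  + rho * \sum_(k < N.+1) alpha k ^+ 2)
               / (2 * \sum_(k < N.+1) alpha k).
Proof.
move=> cf _ _ _ g0 /andP[th0 th1] /andP[l0 l1] gk thk lk mu0 al0 ep0 epdec _ _ epmu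
  Cx0 _ hs ht hphi hP [Cz fz] hx.
have inC : forall k, C (x k) by elim => // k _; case: (hP k).
have [K HK] := @seq_coord_bounded R n x xstar hx.
have M0 : 0 < `|K| + 1 by have := normr_ge0 K; lra.
have [B HB] := @box_bound R n f cf n _ M0.
have HB' : forall y : 'rV[R]_n, (forall i, `|y 0 i| <= `|K| + 1) -> f y <= B.
  by move=> y hy; apply: HB => // i; rewrite leqNgt ltn_ord.
set c := Num.max 1 (B - 2 * f 0 + B + eps 0%N).
have c0 : 0 < c by rewrite lt_max ltr01.
have hc : forall k, enorm (s k) <= c.
  move=> k; rewrite le_max; apply/orP; right.
  have := @sub_bound R n f B (eps k) K (x k) (s k) cf (hs k).1 HB' (HK k) (hs k).2.
  have := epdec 0%N k (leq0n k); lra.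
exists c; split => //; split => //.
move=> Gamma nu rho N.
have Gam1 : 1 <= Gamma by rewrite /Gamma le_max lexx.
have nu0 : 0 <= nu by rewrite /nu divr_ge0 //; lra.
have rho0 : 0 <= rho by rewrite /rho; lra.
pose d k := dotp (x k - xstar) (x k - xstar).
pose g k := f (x k) - fstar f C.
have tfacts : forall k, 0 < t k /\ t k * enorm (s k) <= alpha k /\ t k <= alpha k /\
    alpha k <= Gamma * t k.
  move=> k; have [tk tpos] := ht k.
  have mx1 : 1 <= Num.max 1 (enorm (s k)) by rewrite le_max lexx.
  have mx0 : 0 < Num.max 1 (enorm (s k)) by lra.
  have emx : enorm (s k) <= Num.max 1 (enorm (s k)) by rewrite le_max lexx orbT.
  have mxG : Num.max 1 (enorm (s k)) <= Gamma.
    by rewrite /Gamma ge_max le_max lexx /= le_max (hc k) orbT.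
  split => //; split; last split.
  - rewrite tk mulrAC ler_pdivrMr //. apply: ler_wpM2l; [exact: al0 | exact: emx].
  - rewrite tk ler_pdivrMr //; have := ler_wpM2l (al0 k) mx1; rewrite mulr1 //.
  - have -> : alpha k = t k * Num.max 1 (enorm (s k)).
      by rewrite tk mulrAC -mulrA divff ?mulr1 // lt0r_neq0.
    rewrite [X in _ <= X]mulrC; apply: ler_wpM2l; [exact: ltW | exact: mxG].
have hstep : forall k, 2 * t k * g k <= d k - d k.+1 + rho * alpha k ^+ 2.
  move=> k; rewrite /g -fz /d /rho /nu.
  have [hin hz] := hP k.
  have [tpos [te [ta _]]] := tfacts k.
  have [g0k ggk] := andP (gk k).
  have [t0k ttk] := andP (thk k).
  have [l0k llk] := andP (lk k).
  apply: (@step R n (x k) (x k - t k *: s k) (x k.+1) xstar (s k) (t k) (gam k) (th k)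
      (lam k) gbar lbar (phi k (x k) (x k - t k *: s k) (x k.+1)) (f (x k)) (f xstar)
      (eps k) (alpha k) mu erefl (hz _ Cz) (hz _ (inC k)) ((hphi k _ _ _).2)) => //.
  - by rewrite g0k ltW.
  - by rewrite t0k /=; lra.
  - by rewrite l0k ltW.
  - exact: (hs k).2.
  - exact: ltW.
  - by rewrite ep0 epmu.
have hsum : forall N, \sum_(k < N) 2 * t k * g k <= d 0%N - d N + rho * \sum_(k < N) alpha k ^+ 2.
  elim => [|N' IH]; first by rewrite !big_ord0 subrr mulr0 addr0.
  rewrite !big_ord_recr /=; have := hstep N'; lra.
have hmin : forall k : 'I_N.+1, \big[Num.min/g 0%N]_(k < N.+1) g k <= g k.
  by move=> k; apply: bigmin_le.
set m := \big[Num.min/g 0%N]_(k < N.+1) g k in hmin *.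
have dN : 0 <= d N.+1 by apply: dotp_ge0.
have E0 : enorm (x 0%N - xstar) ^+ 2 = d 0%N by rewrite enorm_sq.
rewrite E0.
have Sa0 : 0 < \sum_(k < N.+1) alpha k.
  rewrite big_ord_recl; have [tp _] := tfacts 0%N.
  have a0 : 0 < alpha 0%N.
    rewrite lt_neqAle al0 andbT; apply/eqP => E; move: tp; rewrite (ht 0%N).1 -E mul0r ltxx //.
  have : 0 <= \sum_(i < N) alpha (bump 0 i) by apply: sumr_ge0 => i _; apply: al0.
  lra.
have Sa20 : 0 <= \sum_(k < N.+1) alpha k ^+ 2 by apply: sumr_ge0 => i _; apply: sqr_ge0.
have d00 : 0 <= d 0%N by apply: dotp_ge0.
have Gam0 : 0 < Gamma by lra.
case: (lerP m 0) => hm.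
  apply: le_trans hm _; apply: divr_ge0; last by lra.
  apply: mulr_ge0; first by lra.
  by have := mulr_ge0 rho0 Sa20; lra.
rewrite ler_pdivlMr; last by lra.
have h1 : m * \sum_(k < N.+1) t k <= \sum_(k < N.+1) t k * g k.
  rewrite mulr_sumr; apply: ler_sum => k _; rewrite mulrC; apply: ler_wpM2l.
    by have [tp _] := tfacts k; exact: ltW.
  exact: hmin.
have h2 : \sum_(k < N.+1) 2 * t k * g k = 2 * \sum_(k < N.+1) t k * g k.
  by rewrite mulr_sumr; apply: eq_bigr => k _; rewrite mulrA.
have h3 : \sum_(k < N.+1) alpha k <= Gamma * \sum_(k < N.+1) t k.
  rewrite mulr_sumr; apply: ler_sum => k _; by have [_ [_ [_ ?]]] := tfacts k.
have := hsum N.+1; rewrite h2 => h4.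
have h5 := ler_wpM2l (ltW hm) h3.
have h6 := ler_wpM2l (ltW Gam0) h1.
set St := \sum_(k < N.+1) t k in h1 h3 h5 h6.
set Sa := \sum_(k < N.+1) alpha k in Sa0 h3 h5 *.
set Sa2 := \sum_(k < N.+1) alpha k ^+ 2 in h4 Sa20 *.
set Stg := \sum_(k < N.+1) t k * g k in h1 h4 h6.
have h7 : Gamma * (2 * Stg) <= Gamma * (d 0%N + rho * Sa2).
  apply: ler_wpM2l; first by lra.
  lra.
lra.
Qed.
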